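(* For every integer $n\ge 1$, let $C_n$ be the family of all distinct full star-simplices $\Sigma^{\star}_{\max}(\lambda,c)$ and full top-simplices $\Sigma^{\top}_{\max}(\lambda,a)$ of $K_n=\operatorname{Cl}(G_n)$ (over all $\lambda\vdash n$, removable corners $c$, addable corners $a$), and let $N_n$ be the nerve of $C_n$. Then \[ \chi(K_n)=\chi(N_n), \] equivalently $b_n=\chi(N_n)-1$ where $b_n:=\chi(K_n)-1$.
   Context: $G_n$ is the partition graph on the set of integer partitions of $n$: two partitions are adjacent if one is obtained from the other by decreasing one part by $1$ and increasing another part (possibly a part equal to $0$) by $1$, followed by reordering, with the result different from the original. $K_n=\operatorname{Cl}(G_n)$ is its clique complex. For $\lambda=(\lambda_1\ge\lambda_2\ge\cdots)\vdash n$ (with $\lambda_k=0$ for $k$ beyond the length $\ell$), a removable corner is a row $i$ with $\lambda_i>\lambda_{i+1}$, and an addable corner is a row $j\le \ell+1$ with $j=1$ or $\lambda_{j-1}>\lambda_j$. For a removable corner $c=i$ and an addable corner $a=j$ with $i\ne j$, $\lambda(c\to a)$ is the partition obtained by decreasing $\lambda_i$ by $1$, increasing $\lambda_j$ by $1$, and reordering; the transfer is admissible if $\lambda(c\to a)\neq\lambda$ (so $\lambda(c\to a)$ is a neighbour of $\lambda$ in $G_n$). Set $A_{\max}(\lambda,c)=\{a:\lambda(c\to a)\text{ admissible}\}$, $C_{\max}(\lambda,a)=\{c:\lambda(c\to a)\text{ admissible}\}$, $\Sigma^{\star}_{\max}(\lambda,c)=\{\lambda\}\cup\{\lambda(c\to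 a):a\in A_{\max}(\lambda,c)\}$ and $\Sigma^{\top}_{\max}(\lambda,a)=\{\lambda\}\cup\{\lambda(c\to a):c\in C_{\max}(\lambda,a)\}$; these vertex sets are cliques of $G_n$, hence simplices of $K_n$, and each is regarded as the subcomplex of $K_n$ consisting of all its faces. The nerve $N_n=N(C_n)$ is the simplicial complex with vertex set $C_n$ whose simplices are the nonempty subfamilies of $C_n$ with nonempty common intersection. $\chi$ denotes Euler characteristic. *)

(* Defs.v *)
From mathcomp Require Import all_boot all_order all_algebra.
Set Implicit Arguments. Unset Strict Implicit. Unset Printing Implicit Defensive.
Import GRing.Theory.

(* A partition of n is encoded by its vector of n+1 parts (lambda_1,...,lambda_{n+1}),
   padded with zeros, weakly decreasing, summing to n.  Index k : 'I_n.+1 is row k+1.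
   (n+1 slots so that the addable row l+1 always has an index, even when l = n.) *)
Definition is_partn (n : nat) (f : {ffun 'I_n.+1 -> 'I_n.+1}) : bool :=
  sorted geq [seq val (f i) | i <- enum 'I_n.+1] && (\sum_(i < n.+1) val (f i) == n).

Definition partn (n : nat) := {f : {ffun 'I_n.+1 -> 'I_n.+1} | is_partn f}.

Definition parts (n : nat) (l : partn n) : seq nat :=
  [seq val (val l i) | i <- enum 'I_n.+1].

Definition transfer (s : seq nat) (i j : nat) : seq nat :=
  sort geq (set_nth 0 (set_nth 0 s i (nth 0 s i).-1) j (nth 0 (set_nth 0 s i (nth 0 s i).-1) j).+1).

Definition adj (n : nat) (l m : partn n) : bool :=
  [exists i : 'I_n.+1, exists j : 'I_n.+1,
     [&& i != j, 0 < nth 0 (parts l) i, parts m == transfer (parts l) i j & m != l]].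

Definition removable (n : nat) (l : partn n) (i : 'I_n.+1) : bool :=
  nth 0 (parts l) i.+1 < nth 0 (parts l) i.

(* addable corner: row 1, or lambda_{j-1} > lambda_j (this forces j <= length+1) *)
Definition addable (n : nat) (l : partn n) (j : 'I_n.+1) : bool :=
  (val j == 0) || (nth 0 (parts l) j < nth 0 (parts l) j.-1).

Definition sigma_star (n : nat) (l : partn n) (c : 'I_n.+1) : {set partn n} :=
  l |: [set m | [exists a : 'I_n.+1,
          [&& addable l a, c != a, parts m == transfer (parts l) c a & m != l]]].

Definition sigma_top (n : nat) (l : partn n) (a : 'I_n.+1) : {set partn n} :=
  l |: [set m | [exists c : 'I_n.+1,
          [&& removable l c, c != a, parts m == transfer (parts l) c a & m != l]]].

Definition Cfam (n : nat) : {set {set partn n}} :=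
  [set S | [exists l : partn n, exists c : 'I_n.+1, removable l c && (S == sigma_star l c)]
        || [exists l : partn n, exists a : 'I_n.+1, addable l a && (S == sigma_top l a)]].

(* A finite simplicial complex is given by its set of (nonempty) faces. *)
Definition Kcomplex (n : nat) : {set {set partn n}} :=
  [set S | (S != set0) && [forall x in S, forall y in S, (x != y) ==> adj x y]].

(* N_n = nerve of C_n: nonempty subfamilies with nonempty common intersection
   (the members are full simplices, so their intersection as subcomplexes is
   nonempty iff their vertex sets meet) *)
Definition nerve (n : nat) : {set {set {set partn n}}} :=
  [set F | [&& F != set0, F \subset Cfam n & \bigcap_(S in F) S != set0]].

Definition euler (T : finType) (F : {set {set T}}) : int :=
  (\sum_(s in F) (-1) ^+ (#|s|.-1))%R.

(* Main.v *)
Require Import Defs.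
From mathcomp Require Import all_boot all_order all_algebra zify.
From Stdlib Require Import Classical.
Set Implicit Arguments. Unset Strict Implicit.

Definition M (s : seq nat) i j :=
  set_nth 0 (set_nth 0 s i (nth 0 s i).-1) j (nth 0 (set_nth 0 s i (nth 0 s i).-1) j).+1.
Lemma transferE s i j : transfer s i j = sort geq (M s i j). Proof. by []. Qed.

Definition mv (s : seq nat) a b (t : seq nat) :=
  size t = size s /\ forall k, nth 0 t k + (k == a) = nth 0 s k + (k == b).
Definition lastp (s : seq nat) a := nth 0 s a.+1 < nth 0 s a.
Definition firstp (s : seq nat) b := (b == 0) || (nth 0 s b < nth 0 s b.-1).

Lemma geq_tr : transitive geq. Proof. move=> x y z /= H1 H2; lia. Qed.
Lemma geq_tot : total geq. Proof. move=> x y /=; exact: leq_total. Qed.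
Lemma geq_anti : antisymmetric geq. Proof. move=> x y /andP [] /= H1 H2; lia. Qed.
Lemma geq_refl : reflexive geq. Proof. by move=> x /=. Qed.

Lemma mono s i j : sorted geq s -> i <= j -> j < size s -> nth 0 s j <= nth 0 s i.
Proof.
move=> Hs Hij Hj.
have := sorted_leq_nth geq_tr geq_refl 0 Hs. move=> /(_ i j); apply => //.
rewrite inE; lia.
Qed.

Lemma nthM s i j k : i != j ->
  nth 0 (M s i j) k = if k == j then (nth 0 s j).+1
                      else if k == i then (nth 0 s i).-1 else nth 0 s k.
Proof.
move=> Hij; rewrite /M nth_set_nth /= nth_set_nth /=.
case: (eqVneq k j) => [_|Hkj] //.
  by rewrite eq_sym (negbTE Hij).
by rewrite nth_set_nth.
Qed.

Lemma sizeM s i j : i < size s -> j < size s -> size (M s i j) = size s.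
Proof. move=> Hi Hj; rewrite /M !size_set_nth; lia. Qed.

Lemma mvM s i j : i != j -> i < size s -> j < size s -> 0 < nth 0 s i -> mv s i j (M s i j).
Proof.
move=> Hij Hi Hj Hp; split; first exact: sizeM.
move=> k; rewrite nthM //.
have Hji : (j == i) = false by rewrite eq_sym (negbTE Hij).
case: (eqVneq k j) => [->|Hkj]; first by rewrite ?Hji ?eqxx; lia.
rewrite ?(negbTE Hkj).
case: (eqVneq k i) => [->|Hki]; rewrite ?eqxx ?(negbTE Hki); lia.
Qed.

Lemma mv_uniq s a b t1 t2 : mv s a b t1 -> mv s a b t2 -> t1 = t2.
Proof.
move=> [S1 H1] [S2 H2]; apply: (@eq_from_nth _ 0); first by rewrite S1 S2.
move=> k _; have := H1 k; have := H2 k; lia.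
Qed.

Lemma count_set s i v p : i < size s ->
  count p (set_nth 0 s i v) + p (nth 0 s i) = count p s + p v.
Proof.
move=> Hi; rewrite count_set_nth_ltn //.
have : p (nth 0 s i) <= count p s.
  case E: (p (nth 0 s i)) => //=. rewrite -has_count; apply/hasP.
  by exists (nth 0 s i) => //; apply: mem_nth.
lia.
Qed.

Lemma countM p s i j : i != j -> i < size s -> j < size s ->
  count p (M s i j) + p (nth 0 s i) + p (nth 0 s j) =
  count p s + p (nth 0 s i).-1 + p (nth 0 s j).+1.
Proof.
move=> Hij Hi Hj; rewrite /M.
set s1 := set_nth 0 s i _.
have Hs1 : size s1 = size s by rewrite /s1 size_set_nth; lia.
have E1 : nth 0 s1 j = nth 0 s j by rewrite /s1 nth_set_nth /= eq_sym (negbTE Hij).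
have := @count_set s1 j (nth 0 s1 j).+1 p; rewrite Hs1 => /(_ Hj).
have := @count_set s i (nth 0 s i).-1 p Hi. rewrite -/s1 E1. lia.
Qed.

Lemma sort_perm_sorted (t u : seq nat) : perm_eq t u -> sorted geq u -> sort geq t = u.
Proof.
move=> Hp Hu; rewrite -{1}(sorted_sort geq_tr Hu).
by apply/(perm_sortP geq_tot geq_tr geq_anti).
Qed.

Lemma transfer_congr s i j a b : i != j -> a != b -> i < size s -> j < size s ->
  a < size s -> b < size s -> nth 0 s i = nth 0 s a -> nth 0 s j = nth 0 s b ->
  transfer s i j = transfer s a b.
Proof.
move=> Hij Hab Hi Hj Ha Hb E1 E2; rewrite !transferE.
apply/(perm_sortP geq_tot geq_tr geq_anti); apply/permP => p.
have := @countM p s i j Hij Hi Hj; have := @countM p s a b Hab Ha Hb. rewrite E1 E2 => <- /eqP; by rewrite -!addnA eqn_add2r => /eqP.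
Qed.

Lemma sorted_M s a b : sorted geq s -> a != b -> a < size s -> b < size s ->
  lastp s a -> firstp s b -> ~~ ((a.+1 == b) && (nth 0 s a == (nth 0 s b).+1)) ->
  sorted geq (M s a b).
Proof.
move=> Hs Hab Ha Hb HL HF Hex.
have Hp : 0 < nth 0 s a by move: HL; rewrite /lastp; lia.
have [Sz Hm] := @mvM s a b Hab Ha Hb Hp.
apply/(sortedP 0) => k; rewrite Sz => Hk /=.
have Hmo : nth 0 s k.+1 <= nth 0 s k by apply: mono => //.
have H1 := Hm k; have H2 := Hm k.+1.
have HF' : k.+1 = b -> nth 0 s b < nth 0 s k.
  by move=> Eb; move: HF; rewrite /firstp -Eb /=.
have Hex' : ~ (a.+1 = b /\ nth 0 s a = (nth 0 s b).+1).
  by move=> [E1 E2]; move: Hex; rewrite E1 E2 !eqxx.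
rewrite /lastp in HL.
move: H1 H2 HF' Hex' HL Hmo.
case: (eqVneq k a) => [?|?]; case: (eqVneq k b) => [?|?];
case: (eqVneq k.+1 a) => [?|?]; case: (eqVneq k.+1 b) => [?|?]; subst => /=; try lia.
Qed.

Lemma Key s a b : sorted geq s -> a != b -> a < size s -> b < size s ->
  lastp s a -> firstp s b -> transfer s a b = s \/ sorted geq (M s a b).
Proof.
move=> Hs Hab Ha Hb HL HF.
case E: ((a.+1 == b) && (nth 0 s a == (nth 0 s b).+1)).
  left; rewrite transferE; apply: sort_perm_sorted => //.
  apply/permP => p; have := @countM p s a b Hab Ha Hb.
  move/andP: E => [_ /eqP ->] /=. lia.
by right; apply: sorted_M => //; rewrite E.
Qed.

Lemma TrOf s a b t : mv s a b t -> sorted geq t -> a != b -> a < size s -> b < size s ->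
  transfer s a b = t.
Proof.
move=> Hm Ht Hab Ha Hb.
have Hp : 0 < nth 0 s a.
  have := (proj2 Hm) a; rewrite eqxx (negbTE Hab); lia.
by rewrite transferE (@mv_uniq _ _ _ _ _ (@mvM s a b Hab Ha Hb Hp) Hm) (sorted_sort geq_tr Ht).
Qed.

Lemma LastOf s i : sorted geq s -> i < size s -> exists a,
  [/\ a < size s, i <= a, nth 0 s a = nth 0 s i & (a.+1 < size s -> nth 0 s a.+1 < nth 0 s a)].
Proof.
move=> Hs Hi.
set p := (fun v => v < nth 0 s i).
set f := find p s.
have Hif : i < f.
  rewrite ltnNge; apply/negP => Hfi.
  have Hh : has p s by rewrite has_find; lia.
  have := nth_find 0 Hh; rewrite -/f /p.
  have := @mono s f i Hs Hfi Hi. lia.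
have Hfs : f <= size s by apply: find_size.
exists f.-1; split; try lia.
  have := before_find 0 (_ : f.-1 < f); rewrite -/f /p => /(_ ltac:(lia)).
  have := @mono s i f.-1 Hs ltac:(lia) ltac:(lia). lia.
move=> Hf1.
have Hh : has p s by rewrite has_find; lia.
have := nth_find 0 Hh; rewrite -/f /p.
have -> : f.-1.+1 = f by lia.
have := before_find 0 (_ : f.-1 < f); rewrite -/f /p => /(_ ltac:(lia)).
have := @mono s i f.-1 Hs ltac:(lia) ltac:(lia). lia.
Qed.

Lemma FirstOf s j : sorted geq s -> j < size s -> exists b,
  [/\ b <= j, nth 0 s b = nth 0 s j & (0 < b -> nth 0 s b < nth 0 s b.-1)].
Proof.
move=> Hs Hj.
set p := pred1 (nth 0 s j).
set f := find p s.
have Hfj : f <= j.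
  rewrite leqNgt; apply/negP => Hjf.
  by have := before_find 0 Hjf; rewrite /p /= eqxx.
have Hh : has p s by rewrite has_find; exact: leq_ltn_trans Hfj Hj.
have /eqP Ef := nth_find 0 Hh; rewrite -/f in Ef.
exists f; split => // Hf.
have := before_find 0 (_ : f.-1 < f); rewrite -/f /p /= => /(_ ltac:(lia)) /eqP.
have := @mono s f.-1 f Hs ltac:(lia) ltac:(lia). lia.
Qed.

Arguments LastOf {s i}. Arguments FirstOf {s j}. Arguments Key {s a b}.
Arguments mvM {s i j}. Arguments TrOf {s a b t}. Arguments mv_uniq {s a b t1 t2}.

Lemma NormS s i j : sorted geq s -> i != j -> i < size s -> j < size s -> 0 < nth 0 s i ->
  transfer s i j = s \/ exists a b, [/\ a != b, (a < size s) && (b < size s), lastp s a,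
     firstp s b & mv s a b (transfer s i j) /\ sorted geq (transfer s i j)].
Proof.
move=> Hs Hij Hi Hj Hp.
have [a [Ha Hia Ea La]] := LastOf Hs Hi.
have [b [Hbj Eb Fb]] := FirstOf Hs Hj.
have Hb : b < size s by lia.
have Hla : lastp s a.
  rewrite /lastp; case: (ltnP a.+1 (size s)) => H; first exact: La.
  by rewrite nth_default // Ea.
have Hfb : firstp s b.
  by rewrite /firstp; case: (posnP b) => [->|H] //=; rewrite Fb // orbT.
have Hab : a != b.
  apply/eqP => Eab; subst b.
  have Hja : j <= a.
    rewrite leqNgt; apply/negP => Haj.
    have := @mono s a.+1 j Hs Haj Hj. have := La ltac:(lia). lia.
  have Hai : a <= i.
    rewrite leqNgt; apply/negP => Hia'.
    have := @mono s i a.-1 Hs ltac:(lia) ltac:(lia). have := Fb ltac:(lia). lia.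
  move/eqP: Hij; lia.
rewrite (@transfer_congr s i j a b) //; try by rewrite ?Ea ?Eb.
have [->|HS] := Key Hs Hab Ha Hb Hla Hfb; first by left.
right; exists a, b; split => //; first by rewrite Ha Hb.
rewrite transferE (sorted_sort geq_tr HS).
have Hpa : 0 < nth 0 s a by rewrite Ea.
split => //; exact: mvM.
Qed.

Arguments NormS {s i j}.
Section Part.
Variable n : nat.

Lemma size_parts (l : Defs.partn n) : size (parts l) = n.+1.
Proof. by rewrite size_map size_enum_ord. Qed.

Lemma sorted_parts (l : Defs.partn n) : sorted geq (parts l).
Proof. case: l => f Hf; by have /andP [] := Hf. Qed.

Lemma parts_inj : injective (@Defs.parts n).
Proof.
move=> [f Hf] [g Hg] /= E; apply: val_inj => /=; apply/ffunP => i; apply: val_inj.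
exact: (proj2 (eq_in_map _ _ _) E) i (mem_enum _ i).
Qed.

Lemma nth_parts (l : Defs.partn n) (i : 'I_n.+1) : nth 0 (parts l) i = val (val l i).
Proof. by rewrite /parts (nth_map ord0) ?size_enum_ord // nth_ord_enum. Qed.

Lemma pos0 (l : Defs.partn n) : 0 < n -> 0 < nth 0 (parts l) 0.
Proof.
move=> Hn; rewrite lt0n; apply/negP => /eqP H0.
have Hall : forall i : 'I_n.+1, val (val l i) = 0.
  move=> i; rewrite -nth_parts.
  have := @mono (parts l) 0 i (sorted_parts l) (leq0n _) ltac:(rewrite size_parts; exact: ltn_ord).
  lia.
case: l H0 Hall => f /andP [_ /eqP Hs] /= _ Hall.
move: Hs; rewrite big1 => [H|i _]; [lia | exact: Hall].
Qed.

Definition Rr (x y : Defs.partn n) a b := [/\ a != b, (a < n.+1) && (b < n.+1),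
  lastp (parts x) a, firstp (parts x) b & mv (parts x) a b (parts y)].

Lemma adj_mv (l m : Defs.partn n) : adj l m -> exists a b, Rr l m a b.
Proof.
move/existsP => [i /existsP [j /and4P [Hij Hp /eqP E Hml]]].
have Hi : i < size (parts l) by rewrite size_parts.
have Hj : j < size (parts l) by rewrite size_parts.
have [Et|[a [b [Hab /andP [Ha Hb] La Fb [Hm _]]]]] :=
  NormS (sorted_parts l) (Hij : (i : nat) != j) Hi Hj Hp.
  by move: Hml; rewrite (parts_inj (etrans E Et)) eqxx.
exists a, b; split => //; last by rewrite E.
by move: Ha Hb; rewrite size_parts => -> ->.
Qed.

Lemma mv_adj (l m : Defs.partn n) a b : a != b -> a < n.+1 -> b < n.+1 ->
  mv (parts l) a b (parts m) -> m != l -> adj l m.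
Proof.
move=> Hab Ha Hb Hm Hml.
apply/existsP; exists (inord a); apply/existsP; exists (inord b).
rewrite !inordK //.
have Hp : 0 < nth 0 (parts l) a.
  have := (proj2 Hm) a; rewrite eqxx (negbTE Hab); lia.
apply/and4P; split => //.
  by apply: contra Hab => /eqP /(congr1 val) /=; rewrite !inordK // => ->.
by rewrite (TrOf Hm (sorted_parts m)) // size_parts.
Qed.

Lemma mv_sym s a b t : mv s a b t -> mv t b a s.
Proof. move=> [Sz H]; split => // k; have := H k; lia. Qed.

Lemma mv_star s c a1 a2 u1 u2 : mv s c a1 u1 -> mv s c a2 u2 -> mv u1 a1 a2 u2.
Proof. move=> [S1 H1] [S2 H2]; split; first by rewrite S1 S2. move=> k; have := H1 k; have := H2 k; lia. Qed.

Lemma mv_top s c1 c2 a u1 u2 : mv s c1 a u1 -> mv s c2 a u2 -> mv u1 c2 c1 u2.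
Proof. move=> [S1 H1] [S2 H2]; split; first by rewrite S1 S2. move=> k; have := H1 k; have := H2 k; lia. Qed.

Lemma elem_mv (l m : Defs.partn n) (c a : 'I_n.+1) : removable l c -> addable l a -> c != a ->
  parts m = transfer (parts l) c a -> m != l -> mv (parts l) c a (parts m).
Proof.
move=> Hc Ha Hca E Hml.
have Hc' : (c : nat) < size (parts l) by rewrite size_parts.
have Ha' : (a : nat) < size (parts l) by rewrite size_parts.
have [Et|HS] := Key (sorted_parts l) (Hca : (c : nat) != a) Hc' Ha' Hc Ha.
  by move: Hml; rewrite (parts_inj (etrans E Et)) eqxx.
have Hp : 0 < nth 0 (parts l) c by move: Hc; rewrite /removable; lia.
by rewrite E transferE (sorted_sort geq_tr HS); apply: mvM.
Qed.

End Part.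

Lemma pair_vec x y z a1 b1 a2 b2 e f : mv x a1 b1 y -> mv x a2 b2 z -> mv y e f z ->
  a1 != b1 -> a2 != b2 -> a1 = a2 \/ b1 = b2.
Proof.
move=> [_ H1] [_ H2] [_ H3] N1 N2.
case: (eqVneq a1 a2) => [->|Na]; first by left.
case: (eqVneq b1 b2) => [->|Nb]; first by right.
exfalso.
have G k : (k == b2) + (k == e) + (k == a1) = (k == b1) + (k == f) + (k == a2) :> nat.
  have := H1 k; have := H2 k; have := H3 k; clear; lia.
have G1 := G a2; have G2 := G b2; have G3 := G a1.
have F1 : (a2 == b2) = false by apply/negbTE.
have F2 : (a2 == a1) = false by rewrite eq_sym; apply/negbTE.
have F3 : (b2 == b1) = false by rewrite eq_sym; apply/negbTE.
have F4 : (b2 == a2) = false by rewrite eq_sym; apply/negbTE.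
have F5 : (a1 == b1) = false by apply/negbTE.
have F6 : (a1 == a2) = false by apply/negbTE.
rewrite eqxx F1 F2 in G1.
case: (eqVneq a2 e) => Ee; last by move: G1; rewrite (negbTE Ee); clear; lia.
subst e.
rewrite eqxx F3 F4 in G2.
case: (eqVneq b2 f) => Ef; last by move: G2; rewrite (negbTE Ef); clear; lia.
subst f.
move: G3; rewrite eqxx F5 F6; clear; lia.
Qed.

Section Part2.
Variable n : nat.

Lemma in_star (l m : Defs.partn n) c : m \in sigma_star l c -> m = l \/
  exists a : 'I_n.+1, [/\ addable l a, c != a, parts m = transfer (parts l) c a & m != l].
Proof.
rewrite /sigma_star in_setU1 inE => /orP [/eqP ->|/existsP [a /and4P [Ha Hca /eqP E Hml]]].
  by left.
by right; exists a.
Qed.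

Lemma in_top (l m : Defs.partn n) a : m \in sigma_top l a -> m = l \/
  exists c : 'I_n.+1, [/\ removable l c, c != a, parts m = transfer (parts l) c a & m != l].
Proof.
rewrite /sigma_top in_setU1 inE => /orP [/eqP ->|/existsP [c /and4P [Hc Hca /eqP E Hml]]].
  by left.
by right; exists c.
Qed.

Lemma ordne (i j : 'I_n.+1) : i != j -> (i : nat) != j.
Proof. by []. Qed.

Lemma star_clique (l : Defs.partn n) c x y : removable l c ->
  x \in sigma_star l c -> y \in sigma_star l c -> x != y -> adj x y.
Proof.
move=> Hc /in_star [->|[a1 [Ha1 Hca1 E1 Hx]]] /in_star [->|[a2 [Ha2 Hca2 E2 Hy]]] Hxy.
- by rewrite eqxx in Hxy.
- exact: (mv_adj (ordne Hca2) (ltn_ord _) (ltn_ord _) (elem_mv Hc Ha2 Hca2 E2 Hy) Hy).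
- have Hac : a1 != c by rewrite eq_sym.
  by apply: (mv_adj (ordne Hac) (ltn_ord _) (ltn_ord _) (mv_sym (elem_mv Hc Ha1 Hca1 E1 Hx))); rewrite eq_sym.
- have M1 := elem_mv Hc Ha1 Hca1 E1 Hx; have M2 := elem_mv Hc Ha2 Hca2 E2 Hy.
  have M := mv_star M1 M2.
  have Na : (a1 : nat) != a2.
    apply/eqP => Ea; move: M1 M2 Hxy; rewrite Ea => M1 M2.
    by rewrite (parts_inj (mv_uniq M1 M2)) eqxx.
  apply: (mv_adj Na (ltn_ord _) (ltn_ord _) M); by rewrite eq_sym.
Qed.

Lemma top_clique (l : Defs.partn n) a x y : addable l a ->
  x \in sigma_top l a -> y \in sigma_top l a -> x != y -> adj x y.
Proof.
move=> Ha /in_top [->|[c1 [Hc1 Hca1 E1 Hx]]] /in_top [->|[c2 [Hc2 Hca2 E2 Hy]]] Hxy.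
- by rewrite eqxx in Hxy.
- exact: (mv_adj (ordne Hca2) (ltn_ord _) (ltn_ord _) (elem_mv Hc2 Ha Hca2 E2 Hy) Hy).
- have Hac : a != c1 by rewrite eq_sym.
  by apply: (mv_adj (ordne Hac) (ltn_ord _) (ltn_ord _) (mv_sym (elem_mv Hc1 Ha Hca1 E1 Hx))); rewrite eq_sym.
- have M1 := elem_mv Hc1 Ha Hca1 E1 Hx; have M2 := elem_mv Hc2 Ha Hca2 E2 Hy.
  have M := mv_top M1 M2.
  have Nc : (c2 : nat) != c1.
    apply/eqP => Ec; move: M1 M2 Hxy; rewrite Ec => M1 M2.
    by rewrite (parts_inj (mv_uniq M1 M2)) eqxx.
  apply: (mv_adj Nc (ltn_ord _) (ltn_ord _) M); by rewrite eq_sym.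
Qed.

Lemma Cfam_clique S x y : S \in Cfam n -> x \in S -> y \in S -> x != y -> adj x y.
Proof.
rewrite inE => /orP [/existsP [l /existsP [c /andP [Hc /eqP ->]]]
                    |/existsP [l /existsP [a /andP [Ha /eqP ->]]]].
  exact: star_clique.
exact: top_clique.
Qed.

End Part2.


Section Cover.
Variable n : nat.

Lemma cover (s : {set Defs.partn n}) : 0 < n -> s != set0 ->
  (forall x y, x \in s -> y \in s -> x != y -> adj x y) ->
  exists2 S, S \in Cfam n & s \subset S.
Proof.
move=> Hn s0 Hcl.
have /set0Pn [x xs] := s0.
have Hy y : y \in s -> y != x -> exists a b, Rr x y a b.
  by move=> ys yx; apply: adj_mv; apply: Hcl; rewrite // eq_sym.
have Hpair y z a1 b1 a2 b2 : y \in s -> z \in s -> y != z ->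
    Rr x y a1 b1 -> Rr x z a2 b2 -> a1 = a2 \/ b1 = b2.
  move=> ys zs yz [N1 _ _ _ M1] [N2 _ _ _ M2].
  have [e [f [_ _ _ _ Hm]]] := adj_mv (Hcl y z ys zs yz).
  exact: pair_vec M1 M2 Hm N1 N2.
have Claim :
  (exists a, [/\ a < n.+1, lastp (parts x) a &
     forall y, y \in s -> y != x -> exists b, Rr x y a b]) \/
  (exists b, [/\ b < n.+1, firstp (parts x) b &
     forall y, y \in s -> y != x -> exists a, Rr x y a b]).
  case: (classic (exists y, y \in s /\ y != x)) => [[y1 [y1s y1x]]|Hno].
    have [a1 [b1 R1]] := Hy y1 y1s y1x.
    case: (classic (forall y, y \in s -> y != x -> exists b, Rr x y a1 b)) => [HA|HA].
      left; exists a1; case: R1 => _ /andP [Ha1 _] La _ _; by split.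
    have [y2 HA'] := not_all_ex_not _ _ HA.
    have [y2s HA''] := imply_to_and _ _ HA'.
    have [y2x Hn2] := imply_to_and _ _ HA''.
    have [a2 [b2 R2]] := Hy y2 y2s y2x.
    have Na : a1 <> a2 by move=> E; apply: Hn2; exists b2; rewrite E.
    have y12 : y1 != y2 by apply/eqP => E; apply: Hn2; exists b1; rewrite -E.
    have Eb : b1 = b2 by case: (Hpair _ _ _ _ _ _ y1s y2s y12 R1 R2).
    case: (classic (forall y, y \in s -> y != x -> exists a, Rr x y a b1)) => [HB|HB].
      right; exists b1; case: R1 => _ /andP [_ Hb1] _ Fb _; by split.
    have [y3 HB'] := not_all_ex_not _ _ HB.
    have [y3s HB''] := imply_to_and _ _ HB'.
    have [y3x Hn3] := imply_to_and _ _ HB''.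
    have [a3 [b3 R3]] := Hy y3 y3s y3x.
    have Nb : b1 <> b3 by move=> E; apply: Hn3; exists a3; rewrite E.
    have y13 : y1 != y3 by apply/eqP => E; apply: Hn3; exists a1; rewrite -E.
    have y23 : y2 != y3 by apply/eqP => E; apply: Hn3; exists a2; rewrite Eb -E.
    have Ea : a1 = a3 by case: (Hpair _ _ _ _ _ _ y1s y3s y13 R1 R3).
    case: (Hpair _ _ _ _ _ _ y2s y3s y23 R2 R3) => E.
      exfalso; exact: Na (etrans Ea (esym E)).
    exfalso; exact: Nb (etrans Eb E).
  left.
  have H0 : 0 < size (parts x) by rewrite size_parts.
  have [a [Ha _ Ea La]] := LastOf (sorted_parts x) H0.
  exists a; split; first by rewrite -(size_parts x).
    rewrite /lastp; case: (ltnP a.+1 (size (parts x))) => H; first exact: La.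
    by rewrite nth_default // Ea; apply: pos0.
  by move=> y ys yx; exfalso; apply: Hno; exists y.
case: Claim => [[a [Ha La HA]]|[b [Hb Fb HB]]].
  exists (sigma_star x (inord a)).
    rewrite inE; apply/orP; left; apply/existsP; exists x; apply/existsP; exists (inord a).
    by rewrite eqxx andbT /removable inordK.
  apply/subsetP => y ys; rewrite /sigma_star in_setU1.
  case: (eqVneq y x) => [->|yx]; first by rewrite ?eqxx.
  rewrite /= inE.
  have [b [Nab /andP [_ Hb] _ Fb M]] := HA y ys yx.
  apply/existsP; exists (inord b); rewrite /addable !inordK //.
  apply/and4P; split => //.
    by rewrite /= inordK.
    by apply: contra Nab => /eqP /(congr1 val) /=; rewrite !inordK // => ->.
  by rewrite (TrOf M (sorted_parts y)) // size_parts.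
exists (sigma_top x (inord b)).
  rewrite inE; apply/orP; right; apply/existsP; exists x; apply/existsP; exists (inord b).
  by rewrite eqxx andbT /addable /= inordK.
apply/subsetP => y ys; rewrite /sigma_top in_setU1.
case: (eqVneq y x) => [->|yx]; first by rewrite ?eqxx.
rewrite /= inE.
have [a [Nab /andP [Ha _] La _ M]] := HB y ys yx.
apply/existsP; exists (inord a); rewrite /removable !inordK //.
apply/and4P; split => //.
  by apply: contra Nab => /eqP /(congr1 val) /=; rewrite !inordK // => ->.
by rewrite (TrOf M (sorted_parts y)) // size_parts.
Qed.

End Cover.

Section Abstract.
Import GRing.Theory.
Local Open Scope ring_scope.
Lemma sgn_pred (k : nat) : (0 < k)%N -> (-1) ^+ k.-1 = - ((-1) ^+ k) :> int.
Proof. by case: k => // k _; rewrite exprS mulN1r opprK. Qed.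

Lemma alt_sum0 (X : finType) (A : {set X}) (a : X) : a \in A ->
  \sum_(F : {set X} | F \subset A) ((-1) ^+ #|F| : int) = 0.
Proof.
move=> aA.
pose sg (F : {set X}) := if a \in F then F :\ a else a |: F.
have sgK : involutive sg.
  move=> F; rewrite /sg; case: (boolP (a \in F)) => aF.
    by rewrite setD11 setD1K.
  by rewrite setU11 setU1K.
have sgS F : (sg F \subset A) = (F \subset A).
  rewrite /sg; case: (boolP (a \in F)) => aF.
    by rewrite -{2}(setD1K aF) subUset sub1set aA.
  by rewrite subUset sub1set aA.
have sgC F : ((-1) ^+ #|sg F| : int) = - (-1) ^+ #|F|.
  rewrite /sg; case: (boolP (a \in F)) => aF.
    by rewrite [in RHS](cardsD1 a F) aF exprS mulN1r opprK.
  by rewrite cardsU1 aF exprS mulN1r.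
set S := \sum_(F | _) _.
have : S = - S.
  rewrite {1}/S (reindex_inj (can_inj sgK)) /=.
  under eq_bigl do rewrite sgS.
  by rewrite /S -sumrN; apply: eq_bigr => F _; rewrite sgC.
lia.
Qed.

Lemma alt_sum (X : finType) (A : {set X}) :
  \sum_(F : {set X} | (F != set0) && (F \subset A)) ((-1) ^+ (#|F|.-1) : int)
  = ((A != set0) : nat)%:Z.
Proof.
case: (set_0Vmem A) => [->|[a aA]].
  rewrite eqxx big_pred0 // => F; rewrite subset0; by case: (F == set0).
have -> : (A != set0) by apply/set0Pn; exists a.
have := @alt_sum0 X A a aA.
rewrite (bigD1 set0) ?sub0set //= cards0 expr0.
rewrite (eq_bigl (fun F => (F != set0) && (F \subset A))); last by move=> F; rewrite andbC.
have -> : \sum_(F | (F != set0) && (F \subset A)) ((-1) ^+ (#|F|.-1) : int) =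
          - \sum_(F | (F != set0) && (F \subset A)) ((-1) ^+ #|F| : int).
  rewrite -sumrN; apply: eq_bigr => F /andP [F0 _]; rewrite sgn_pred //.
  by rewrite card_gt0.
set T := \sum_(F | _) _. lia.
Qed.

Lemma euler_cover (T : finType) (K C : {set {set T}}) :
  (forall s, s \in K -> s != set0) ->
  (forall s, s \in K -> exists2 S, S \in C & s \subset S) ->
  (forall (S s : {set T}), S \in C -> s \subset S -> s != set0 -> s \in K) ->
  euler K = euler [set F | [&& F != set0, F \subset C & \bigcap_(S in F) S != set0]].
Proof.
move=> HK0 HKC HCK; rewrite /euler.
pose h (X : finType) (s : {set X}) : int := (-1) ^+ (#|s|.-1).
pose Q (s : {set T}) (F : {set {set T}}) :=
  (F != set0) && (F \subset [set S in C | s \subset S]).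
transitivity (\sum_(s in K) \sum_(F | Q s F) h _ s * h _ F).
  apply: eq_bigr => s Hs; rewrite -big_distrr /= /Q alt_sum.
  have [S SC sS] := HKC s Hs.
  have -> : [set S in C | s \subset S] != set0.
    by apply/set0Pn; exists S; rewrite inE SC sS.
  by rewrite mulr1.
rewrite (exchange_big_dep (fun F => (F != set0) && (F \subset C))); last first.
  move=> s F _ /andP [-> /subsetP HF]; apply/subsetP => S /HF; rewrite inE.
  by case/andP.
rewrite /= [RHS]big_mkcond [LHS]big_mkcond /=; apply: eq_bigr => F _.
rewrite inE.
case: (boolP (F != set0)) => F0 //=; case: (boolP (F \subset C)) => FC //=.
rewrite -big_distrl /=.
rewrite (eq_bigl (fun s => (s != set0) && (s \subset \bigcap_(S in F) S))); last first.
  move=> s; rewrite /Q F0 /=.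
  have E : (F \subset [set S in C | s \subset S]) = (s \subset \bigcap_(S in F) S).
    apply/idP/idP.
      move/subsetP => HF; apply/bigcapsP => S /HF; rewrite inE; by case/andP.
    move/bigcapsP => HF; apply/subsetP => S SF; rewrite inE HF // andbT.
    exact: (subsetP FC).
  rewrite E; apply/andP/andP => [[sK sI]|[s0 sI]]; split => //; first exact: HK0.
  have /set0Pn [S0 SF] := F0.
  apply: (HCK S0) => //; first exact: (subsetP FC).
  by apply: subset_trans sI _; apply: bigcap_inf.
rewrite alt_sum.
by case: (\bigcap_(S in F) S != set0); rewrite /= ?mul1r ?mul0r.
Qed.

End Abstract.

Unset Implicit Arguments.

Theorem proposition3p2 (n : nat) : 0 < n -> euler (Kcomplex n) = euler (nerve n).
Proof.
move=> Hn; rewrite /nerve; apply: euler_cover.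
- by move=> s; rewrite inE => /andP [].
- move=> s; rewrite inE => /andP [s0 /forallP H]; apply: cover => // x y xs ys xy.
  move: (H x); rewrite xs /= => /forallP /(_ y); rewrite ys xy /=; exact.
- move=> S s HS sS s0; rewrite inE s0 /=.
  apply/forallP => x; apply/implyP => xs; apply/forallP => y; apply/implyP => ys.
  apply/implyP => xy.
  exact: Cfam_clique HS (subsetP sS x xs) (subsetP sS y ys) xy.
Qed.
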